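(* Let $G=\square_{i=1}^t G^{(i)}$ be a product graph of dimension $t$ and let $M\subseteq V(G)$ with $|M|=m\le t$. Then there exist pairwise (vertex-)disjoint projections $H_1,\dots,H_m$ of $G$, each of dimension at least $t-m+1$, such that every $v\in M$ lies in exactly one of $H_1,\dots,H_m$ (and each $H_j$ contains exactly one vertex of $M$). *)

(* Defs.v *)
From mathcomp Require Import all_boot.
Set Implicit Arguments. Unset Strict Implicit. Unset Printing Implicit Defensive.

(* A product graph G = G^(1) [] ... [] G^(t): factor i has vertex set V i
   (a finite type) and edge relation E i.  Vertices of G are tuples. *)
Definition pvert (t : nat) (V : 'I_t -> finType) := {dffun forall i : 'I_t, V i}.

Definition padj (t : nat) (V : 'I_t -> finType) (E : forall i, rel (V i))
  (u v : pvert V) : bool :=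
  [exists i, E i (u i) (v i) && [forall j, (j != i) ==> (u j == v j)]].

(* A projection of G: a set S of free coordinates and a base vertex a; its
   vertex set consists of the vertices agreeing with a outside S (it induces
   the subgraph isomorphic to the product of the G^(i), i in S). *)
Definition projection (t : nat) (V : 'I_t -> finType) : Type :=
  ({set 'I_t} * pvert V)%type.

Definition proj_dim (t : nat) (V : 'I_t -> finType) (H : projection V) : nat :=
  #|H.1|.

Definition proj_vset (t : nat) (V : 'I_t -> finType) (H : projection V)
  : {set pvert V} :=
  [set v : pvert V | [forall i, (i \notin H.1) ==> (v i == H.2 i)]].

(* Main.v *)
Require Import Defs.
From mathcomp Require Import all_boot.
From mathcomp Require Import zify.

Lemma disjointP (T : finType) (A B : {set T}) :
  reflect (forall x, x \in A -> x \in B -> False) [disjoint A & B].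
Proof.
apply: (iffP idP) => [H x xA xB | H]; first by rewrite (disjointFr H xA) in xB.
rewrite disjoint_subset; apply/subsetP => x xA; rewrite inE; apply/negP => xB.
exact: H x xA xB.
Qed.

Section Key.
Variables (t : nat) (V : 'I_t -> finType).

Lemma vset_base (P : projection V) : P.2 \in proj_vset P.
Proof. by rewrite inE; apply/forallP => i; apply/implyP. Qed.

Lemma vset_coord (P : projection V) z i : z \in proj_vset P -> i \notin P.1 ->
  z i = P.2 i.
Proof. by rewrite inE => /forallP/(_ i)/implyP H /H/eqP. Qed.

Lemma key n : forall (F : {set 'I_t}) (M : {set pvert V}), #|F| = n -> #|M| <= n ->
  {P : pvert V -> projection V |
    (forall v, v \in M -> (P v).2 = v /\ (P v).1 \subset F /\ n - #|M| + 1 <= #|(P v).1|) /\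
    (forall u w, u \in M -> w \in M -> u != w ->
       [disjoint proj_vset (P u) & proj_vset (P w)])}.
Proof.
elim: n => [|n IH] F M HF HM.
  exists (fun v => (F, v)); split.
    by move=> v vM; move: HM; rewrite leqn0 => /eqP/cards0_eq M0; rewrite M0 inE in vM.
  by move=> u w uM; move: HM; rewrite leqn0 => /eqP/cards0_eq M0; rewrite M0 inE in uM.
case: (pickP [pred i | (i \in F) && [exists u in M, exists w in M, u i != w i]]) => [i /= /andP [iF Hex] | Hno].
  have HF' : #|F :\ i| = n by move: HF; rewrite (cardsD1 i F) iF => -[].
  have Hpr : forall x : V i, [set v in M | v i == x] \proper M.
    move=> x; case/existsP: Hex => u0 /andP [u0M /existsP [w0 /andP [w0M uw0]]].
    rewrite properE; apply/andP; split.
      by apply/subsetP => z; rewrite inE => /andP [].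
    apply/negP => /subsetP H.
    have := H u0 u0M; have := H w0 w0M; rewrite !inE u0M w0M /= => /eqP e1 /eqP e2.
    by rewrite e1 e2 eqxx in uw0.
  have Hx : forall x : V i, #|[set v in M | v i == x]| <= n.
    by move=> x; have := proper_card (Hpr x); lia.
  pose PP x := sval (IH (F :\ i) [set v in M | v i == x] HF' (Hx x)).
  have PPP x := svalP (IH (F :\ i) [set v in M | v i == x] HF' (Hx x)).
  exists (fun v : pvert V => PP (v i) v); split.
    move=> v vM.
    have vMx : v \in [set z in M | z i == v i] by rewrite inE vM eqxx.
    have [H1 [H2 H3]] := (PPP (v i)).1 v vMx.
    split => //; split; first by apply: subset_trans H2 (subsetDl _ _).
    have Hc := proper_card (Hpr (v i)).
    apply: leq_trans H3; move: Hc HM.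
    move: #|M| #|[set v0 in M | v0 i == v i]| => a b.
    lia.
  move=> u w uM wM uw.
  case: (eqVneq (u i) (w i)) => [e|ne].
    have uMx : u \in [set z in M | z i == u i] by rewrite inE uM eqxx.
    have wMx : w \in [set z in M | z i == u i] by rewrite inE wM e eqxx.
    by rewrite /= -e; exact: (PPP (u i)).2 u w uMx wMx uw.
  apply/disjointP => z zu zw.
  have uMx : u \in [set z in M | z i == u i] by rewrite inE uM eqxx.
  have wMx : w \in [set z in M | z i == w i] by rewrite inE wM eqxx.
  have [Hu1 [Hu2 _]] := (PPP (u i)).1 u uMx.
  have [Hw1 [Hw2 _]] := (PPP (w i)).1 w wMx.
  have iu : i \notin (PP (u i) u).1.
    by apply/negP => /(subsetP Hu2); rewrite !inE eqxx.
  have iw : i \notin (PP (w i) w).1.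
    by apply/negP => /(subsetP Hw2); rewrite !inE eqxx.
  have e1 := @vset_coord _ z i zu iu; have e2 := @vset_coord _ z i zw iw.
  move: e1 e2; rewrite /PP Hu1 Hw1 => e1 e2.
  by rewrite e1 in e2; rewrite e2 eqxx in ne.
exists (fun v => (F, v)); split.
  move=> v vM; split => //; split => //=.
  have : 0 < #|M| by apply/card_gt0P; exists v.
  rewrite HF; move: #|M| => a; lia.
move=> u w uM wM uw; apply/disjointP => z zu zw.
have : u = w.
  apply/ffunP => k.
  case kF : (k \in F).
    have := Hno k; rewrite /= kF /= => /negbT.
    rewrite negb_exists => /forallP /(_ u); rewrite uM /= negb_exists => /forallP /(_ w).
    by rewrite wM /= negbK => /eqP.
  have kF' : k \notin F by rewrite kF.
  by rewrite -(@vset_coord _ z k zu kF') (@vset_coord _ z k zw kF').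
by move=> e; rewrite e eqxx in uw.
Qed.

End Key.

Theorem mainTheorem3 (t : nat) (V : 'I_t -> finType)
  (E : forall i : 'I_t, rel (V i)) (M : {set pvert V}) :
  #|M| <= t ->
  exists H : 'I_#|M| -> projection V,
    (forall j, t - #|M| + 1 <= proj_dim (H j)) /\
    (forall j k, j != k -> [disjoint proj_vset (H j) & proj_vset (H k)]) /\
    (forall v, v \in M -> exists! j, v \in proj_vset (H j)) /\
    (forall j, #|proj_vset (H j) :&: M| = 1).
Proof.
move=> HM.
have HT : #|[set: 'I_t]| = t by rewrite cardsT card_ord.
have [P [P1 P2]] := @key t V t setT M HT HM.
have inP v : v \in M -> v \in proj_vset (P v).
  by move=> vM; have [e _] := P1 v vM; rewrite -{1}e vset_base.
exists (fun j => P (enum_val j)); split; last split; last split.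
- by move=> j; have [_ [_ ->]] := P1 _ (enum_valP j).
- move=> j k jk; apply: P2; try exact: enum_valP.
  by apply: contra jk => /eqP/enum_val_inj ->.
- move=> v vM; exists (enum_rank_in vM v); split.
    by rewrite (enum_rankK_in vM vM) inP.
  move=> k vk; case: (eqVneq (enum_rank_in vM v) k) => // ne; exfalso.
  have ev : enum_val (enum_rank_in vM v) = v by rewrite (enum_rankK_in vM vM).
  have : enum_val k != v.
    by rewrite -ev; apply: contra ne => /eqP/enum_val_inj ->.
  move=> nv; have := P2 _ _ (enum_valP k) vM nv.
  by move/disjointP/(_ v vk (inP v vM)).
- move=> j; apply/eqP/cards1P; exists (enum_val j); apply/setP => z.
  rewrite in_setI in_set1; apply/andP/eqP => [[zj zM]|->].
    apply/eqP; apply/negP => /negP nz.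
    have := P2 _ _ zM (enum_valP j) nz.
    by move/disjointP/(_ z (inP z zM) zj).
  by split; [exact: (inP _ (enum_valP j)) | exact: enum_valP].
Qed.
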